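(* For every decorated tree $\mathcal{T}$, the integer $M(\mathcal{T}) + F(\mathcal{T})$ is even.
   Context: A graph is a pair $(X_0,X_1)$ of finite sets such that each element of $X_1$ (an edge) is a $2$-element subset of $X_0$; elements of $X_0$ are called cells. The valency $\delta_x$ of a cell $x$ is the number of edges containing $x$. A path is a tuple $(x_0,\dots,x_n)$ ($n\ge 0$) of cells such that $\{x_i,x_{i+1}\}$ is an edge for each $i<n$ and these $n$ edges are pairwise distinct; a cell (resp. edge) is in the path if it is one of the $x_i$ (resp. one of the $\{x_i,x_{i+1}\}$). The graph is a tree if for any cells $x,y$ there is a unique path from $x$ to $y$, denoted $\gamma_{x,y}$. A decorated tree is a $5$-tuple $\mathcal{T}=(V,A,E,f,q)$ where $V$ (vertices) and $A$ (arrows) are finite disjoint sets, $(V\cup A,E)$ is a tree, every arrow has valency $1$, $f:A\to\mathbb{Z}$ is a map, $q$ assigns an integer $q(e,x)$ (the decoration of $e$ near $x$) to each pair $(e,x)$ with $e\in E$, $x\in e$, such that $q(e,\alpha)=1$ whenever $\alpha\in A$, and for every $v\in V$ and distinct edges $e,e'$ containing $v$, $\gcd(q(e,v),q(e',v))=1$. Let $A_0=\{\alpha\in A: f(\alpha)=0\}$. For $x\in V\cup A$ and an edge $e\ni x$, $Q(e,x)=\prod q(e',x)$ over edges $e'\neq e$ containing $x$ (empty products equal $1$). An edge $\varepsilon$ is incident to a path $\gamma$ if $\varepsilon$ is not in $\gamma$ but contains some cell $u$ of $\gamma$; then $q(\varepsilon,\gamma):=q(\varepsilon,u)$. For $v\in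 V\cup A$ and $\alpha\in A$ with $v\ne\alpha$, $x_{v,\alpha}=f(\alpha)\prod_\varepsilon q(\varepsilon,\gamma_{v,\alpha})$ over all edges $\varepsilon$ incident to $\gamma_{v,\alpha}$, and $\hat x_{v,\alpha}$ is the same expression with the product restricted to those $\varepsilon$ not containing $v$. For $v\in V\cup A_0$, $N_v=\sum_{\alpha\in A\setminus A_0} x_{v,\alpha}$, and $M(\mathcal{T})=-\sum_{v\in V\cup A_0}N_v(\delta_v-2)$. For $u\in V\cup A$ and an edge $e\ni u$, $p(u,e)=\sum \hat x_{u,\alpha}$ over $\alpha\in A\setminus A_0$ such that $e$ is in $\gamma_{u,\alpha}$. For $\alpha\in A\setminus A_0$ with unique incident edge $e_\alpha$, $F(\alpha)=\gcd(f(\alpha),p(\alpha,e_\alpha))\ge 0$, and $F(\mathcal{T})=\sum_{\alpha\in A\setminus A_0}F(\alpha)$. *)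

(* Defs.v *)
From HB Require Import structures.
From mathcomp Require Import all_boot all_order all_algebra.
Set Implicit Arguments. Unset Strict Implicit. Unset Printing Implicit Defensive.
Import Order.TTheory GRing.Theory Num.Theory.
Local Open Scope ring_scope.

Section Graphs.
Variable T : finType.
Implicit Types (E : {set {set T}}) (p : seq T).

Definition pedges p : seq {set T} :=
  if p is x :: s then pairmap (fun a b => [set a; b]) x s else [::].

Definition is_path_from E (x y : T) p : bool :=
  if p is x0 :: s then
    [&& x0 == x, last x0 s == y, all (fun e => e \in E) (pedges p)
      & uniq (pedges p)]
  else false.

Definition is_tree E : Prop :=
  forall x y : T, (exists p, is_path_from E x y p) /\
    (forall p p', is_path_from E x y p -> is_path_from E x y p' -> p = p').

Definition valency E (x : T) : nat := #|[set e in E | x \in e]|.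

End Graphs.

(* A decorated tree whose set of cells is the finite type T; the arrows are
   the set dA and the vertices are its complement. *)
Record dtree (T : finType) := DTree {
  dA : {set T};
  dE : {set {set T}};
  df : T -> int;
  dq : {set T} -> T -> int;
  dE_two : forall e, e \in dE -> #|e| = 2%N;
  d_is_tree : is_tree dE;
  d_arrow_leaf : forall a, a \in dA -> valency dE a = 1%N;
  d_q_arrow : forall e a, e \in dE -> a \in e -> a \in dA -> dq e a = 1;
  d_q_coprime : forall v e e', v \notin dA -> e \in dE -> e' \in dE ->
    e != e' -> v \in e -> v \in e' -> gcdz (dq e v) (dq e' v) = 1
}.

Section Invariants.
Variables (T : finType) (D : dtree T).
(* gamma x y is (the) path from x to y; it is unique since D is a tree. *)
Variable gamma : T -> T -> seq T.

Definition dV : {set T} := ~: dA D.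
Definition dA0 : {set T} := [set a in dA D | df D a == 0].
Definition dA1 : {set T} := dA D :\: dA0.
Definition delta (x : T) : int := (valency (dE D) x)%:Z.

Definition incident (eps : {set T}) (p : seq T) : bool :=
  (eps \in dE D) && (eps \notin pedges p) && has (fun u => u \in eps) p.

Definition qpath (eps : {set T}) (p : seq T) : int :=
  if [pick u | (u \in eps) && (u \in p)] is Some u then dq D eps u else 1.

Definition xva (v a : T) : int :=
  df D a * \prod_(eps in dE D | incident eps (gamma v a)) qpath eps (gamma v a).

Definition xhat (v a : T) : int :=
  df D a * \prod_(eps in dE D | incident eps (gamma v a) && (v \notin eps))
              qpath eps (gamma v a).

Definition Nv (v : T) : int := \sum_(a in dA1) xva v a.

Definition Minv : int := - \sum_(v in dV :|: dA0) Nv v * (delta v - 2).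

Definition pue (u : T) (e : {set T}) : int :=
  \sum_(a in dA1 | e \in pedges (gamma u a)) xhat u a.

Definition arrow_edge (a : T) : {set T} :=
  if [pick e in dE D | a \in e] is Some e then e else set0.

Definition Falpha (a : T) : int := gcdz (df D a) (pue a (arrow_edge a)).

Definition Finv : int := \sum_(a in dA1) Falpha a.

End Invariants.

(* Main.v *)
Require Import Defs.
From HB Require Import structures.
From mathcomp Require Import all_boot all_order all_algebra.
From mathcomp Require Import zify.
Import Order.TTheory GRing.Theory Num.Theory.
Set Implicit Arguments. Unset Strict Implicit. Unset Printing Implicit Defensive.

Section Paths.
Variable T : finType.
Variable E : {set {set T}}.

Lemma pedges_cons2 (x y : T) s : pedges (x :: y :: s) = [set x; y] :: pedges (y :: s).
Proof. by []. Qed.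

Lemma path_head x y p : is_path_from E x y p -> p = x :: behead p.
Proof. by case: p => //= x0 s /and4P [/eqP -> _ _ _]. Qed.

Lemma path_behead x y z0 z s :
  is_path_from E x y [:: z0, z & s] -> is_path_from E z y (z :: s).
Proof.
rewrite /is_path_from pedges_cons2 /= => /and4P [_ Hl /andP [_ Ha] /andP [_ Hu]].
by rewrite eqxx Hl Ha Hu.
Qed.

Lemma path_cons x z y p : is_path_from E z y p -> [set x; z] \in E ->
  [set x; z] \notin pedges p -> is_path_from E x y (x :: p).
Proof.
case: p => // z0 s /and4P [/eqP -> Hl Ha Hu] He Hn.
by rewrite /is_path_from pedges_cons2 /= eqxx Hl He Ha Hn Hu.
Qed.

Lemma pedges_behead_sub (p : seq T) e : e \in pedges (behead p) -> e \in pedges p.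
Proof. by case: p => [|x [|y s]] //= H; rewrite inE H orbT. Qed.

Lemma pedges_drop_sub n (p : seq T) e : e \in pedges (drop n p) -> e \in pedges p.
Proof.
elim: n p => [|n IH] p; first by rewrite drop0.
case: p => [|x s] //= H; apply: (@pedges_behead_sub (x :: s)); exact: IH.
Qed.

Lemma path_drop d n x y p : is_path_from E x y p -> (n < size p)%N ->
  is_path_from E (nth d p n) y (drop n p).
Proof.
elim: n x p => [|n IH] x p.
  case: p => //= z s H _; move: (H) => /and4P [/eqP Hz _ _ _].
  by rewrite Hz in H *.
case: p => [|z0 [|z s]] // H Hs.
have H' := path_behead H.
exact: (IH z (z :: s) H' Hs).
Qed.

Lemma pedges_mem (p : seq T) e : e \in pedges p -> exists a b, [/\ a \in p, b \in p & e = [set a; b]].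
Proof.
elim: p => [|x s IH] //; case: s IH => [|y s] IH //.
rewrite pedges_cons2 inE => /orP [/eqP -> | H].
  by exists x, y; rewrite !inE !eqxx /= orbT.
have [a [b [Ha Hb ->]]] := IH H.
by exists a, b; rewrite !inE -!(in_cons y s) Ha Hb !orbT.
Qed.

Lemma path_all x y p e : is_path_from E x y p -> e \in pedges p -> e \in E.
Proof.
case: p => // z s /and4P [_ _ /allP Ha _] He; exact: Ha.
Qed.

Lemma path_uniqe x y p : is_path_from E x y p -> uniq (pedges p).
Proof. by case: p => // z s /and4P []. Qed.

Lemma pedges_rcons (p : seq T) z : (0 < size p)%N ->
  pedges (rcons p z) = rcons (pedges p) [set last z p; z].
Proof.
case: p => // x s _ /=; rewrite -cats1 pairmap_cat /= cats1; congr rcons.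
Qed.

Lemma pedges_rev (p : seq T) : pedges (rev p) = rev (pedges p).
Proof.
elim: p => [|x s IH] //; case: s IH => [|y s] IH //.
rewrite rev_cons pedges_rcons ?size_rev // IH pedges_cons2 rev_cons.
by rewrite last_rcons rev_cons setUC.
Qed.

Lemma path_rev x y p : is_path_from E x y p -> is_path_from E y x (rev p).
Proof.
case: p => // z s /and4P [/eqP -> Hl Ha Hu].
have Hr : rev (x :: s) = last x s :: rev (belast x s) by rewrite lastI rev_rcons.
have Hl' : last (last x s) (rev (belast x s)) = x.
  by rewrite -[last _ _]/(last y (last x s :: rev (belast x s))) -Hr rev_cons last_rcons.
have He : pedges (last x s :: rev (belast x s)) = rev (pedges (x :: s)).
  by rewrite -Hr pedges_rev.
rewrite Hr /is_path_from He Hl' (eqP Hl) eqxx all_rev rev_uniq.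
by rewrite eqxx Ha Hu.
Qed.

Section Tree.
Hypothesis Htree : is_tree E.

Lemma path_unique x y p p' : is_path_from E x y p -> is_path_from E x y p' -> p = p'.
Proof. by move=> H H'; have [_ U] := Htree x y; exact: U. Qed.

Lemma path_uniq x y p : is_path_from E x y p -> uniq p.
Proof.
move=> H; apply: contraT => /(uniqPn x) [i [j [Hij Hj Heq]]].
have Hi : (i < size p)%N by apply: ltn_trans Hj.
have P1 := path_drop x H Hi; have P2 := path_drop x H Hj.
rewrite Heq in P1.
have := path_unique P1 P2 => /(congr1 size); rewrite !size_drop => Hs.
exfalso; lia.
Qed.

Lemma chord x y p u w : is_path_from E x y p -> u \in p -> w \in p -> u != w ->
  [set u; w] \in E -> [set u; w] \in pedges p.
Proof.
move=> H.
wlog Hlt : u w / (index u p < index w p)%N.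
  move=> Hw Hu Hw' Hne He.
  case: (ltngtP (index u p) (index w p)) => Hc; first exact: Hw.
  - rewrite setUC; apply: Hw => //; [by rewrite eq_sym | by rewrite setUC].
  - exfalso; move/negP: Hne; apply; apply/eqP.
    by rewrite -(nth_index x Hu) -(nth_index x Hw') Hc.
move=> Hu Hw Hne He.
apply: contraT => Hn.
have Hj : (index w p < size p)%N by rewrite index_mem.
have Pj := path_drop x H Hj; rewrite nth_index // in Pj.
have Pc : is_path_from E u y (u :: drop (index w p) p).
  apply: (path_cons Pj He); apply: contra Hn; exact: pedges_drop_sub.
have Hi : (index u p < size p)%N by rewrite index_mem.
have Pi := path_drop x H Hi; rewrite nth_index // in Pi.
have Heq := path_unique Pi Pc.
have : [set u; w] \in pedges (drop (index u p) p).
  by rewrite Heq (drop_nth x Hj) nth_index // pedges_cons2 mem_head.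
by move/pedges_drop_sub; rewrite (negPf Hn).
Qed.

End Tree.

End Paths.

Local Open Scope ring_scope.

Notation K := ('F_2 : fieldType).

Lemma two0 : (2%:R : K) = 0.
Proof. exact: (pchar_Fp_0 (isT : prime 2)). Qed.

Lemma addKK (x : K) : x + x = 0.
Proof. by rewrite -mulr2n -mulr_natr two0 mulr0. Qed.

Lemma oppK2 (x : K) : - x = x.
Proof. by apply/eqP; rewrite -subr_eq0 -opprD addKK oppr0. Qed.

Lemma K01 (x : K) : x = 0 \/ x = 1.
Proof.
case: x => [[|[|n]] Hn]; [left|right|by []]; exact: val_inj.
Qed.

Definition phi (z : int) : K := z%:~R.

Lemma phi_nat (n : nat) : phi n = n%:R.
Proof. by []. Qed.

Lemma natF2 (n : nat) : ((n%:R : K) == 0) = (2 %| n)%N.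
Proof. by rewrite -val_eqE /= val_Fp_nat. Qed.

Lemma phi0_dvd (z : int) : (phi z == 0) = (2 %| z)%Z.
Proof.
case: z => n; first exact: natF2.
by rewrite /phi NegzE mulrNz oppr_eq0 natF2.
Qed.

Lemma phiD a b : phi (a + b) = phi a + phi b.
Proof. exact: rmorphD. Qed.
Lemma phiM a b : phi (a * b) = phi a * phi b.
Proof. exact: rmorphM. Qed.

Lemma phi_gcd a b : phi (gcdz a b) = phi a + phi b + phi a * phi b.
Proof.
have H := dvdz_gcd 2 a b; rewrite -!phi0_dvd in H.
case: (K01 (phi a)) H => ->; case: (K01 (phi b)) => ->;
  case: (K01 (phi (gcdz a b))) => ->; rewrite ?eqxx ?oner_eq0 //=;
  rewrite ?addr0 ?add0r ?mulr0 ?mul0r ?mulr1 ?addKK //.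
all: try by move=> _; rewrite ?addr0 ?add0r.
Qed.

Lemma phi_prod (I : Type) (r : seq I) (P : pred I) (F : I -> int) :
  phi (\prod_(i <- r | P i) F i) = \prod_(i <- r | P i) phi (F i).
Proof. exact: rmorph_prod. Qed.

Lemma phi_sum (I : Type) (r : seq I) (P : pred I) (F : I -> int) :
  phi (\sum_(i <- r | P i) F i) = \sum_(i <- r | P i) phi (F i).
Proof. exact: rmorph_sum. Qed.

Lemma parity (X : finType) (S : {set X}) (q : X -> K) (b : bool) :
  (forall i j, i \in S -> j \in S -> q i = 0 -> q j = 0 -> i = j) ->
  (~~ b -> forall i, i \in S -> q i = 1) ->
  (#|S| + b)%:R * \prod_(i in S) q i + \sum_(i in S) \prod_(j in S | j != i) q j = b%:R.
Proof.
move=> Hu Hb.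
case: (boolP [exists i in S, q i == 0]) => [/exists_inP [i0 Hi0 /eqP Hq0] | /exists_inP Hno].
  case: b Hb => [_ | Hb]; last by have := Hb isT i0 Hi0; rewrite Hq0 => /eqP; rewrite eq_sym oner_eq0.
  rewrite (bigD1 i0) //= Hq0 mul0r mulr0 add0r (bigD1 i0) //=.
  rewrite [X in _ + X]big1 ?addr0; last first.
    move=> i /andP [Hi Hne]; rewrite (bigD1 i0) /=; last by rewrite Hi0 eq_sym.
    by rewrite Hq0 mul0r.
  apply: big1 => j /andP [Hj Hne].
  case: (K01 (q j)) => // Hqj; by rewrite (Hu _ _ Hj Hi0 Hqj Hq0) eqxx in Hne.
have H1 : forall i, i \in S -> q i = 1.
  move=> i Hi; case: (K01 (q i)) => // Hq; exfalso; apply: Hno; exists i => //; exact/eqP.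
rewrite big1 // mulr1 (eq_bigr (fun _ => 1)); last first.
  by move=> i Hi; apply: big1 => j /andP [Hj _]; exact: H1.
by rewrite sumr_const natrD addrAC addKK add0r.
Qed.

Lemma sym_sum (X : finType) (S : {set X}) (G : X -> X -> K) :
  (forall a b, G a b = G b a) ->
  \sum_(a in S) \sum_(b in S | b != a) G a b = 0.
Proof.
move=> HG.
have Hsplit : forall a, \sum_(b in S | b != a) G a b =
   \sum_(b in S) (enum_rank b < enum_rank a)%N%:R * G a b +
   \sum_(b in S) (enum_rank a < enum_rank b)%N%:R * G a b.
  move=> a; rewrite -big_split big_mkcondr /=; apply: eq_bigr => b _.
  rewrite -mulrDl -natrD.
  case: (ltngtP (enum_rank b) (enum_rank a)) => H.
  - have -> : b != a by apply/eqP => Hb; rewrite Hb ltnn in H.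
    by rewrite mul1r.
  - have -> : b != a by apply/eqP => Hb; rewrite Hb ltnn in H.
    by rewrite mul1r.
  - have -> : b = a by apply: enum_rank_inj; apply: val_inj.
    by rewrite eqxx mul0r.
rewrite (eq_bigr _ (fun a _ => Hsplit a)) big_split /=.
rewrite [X in _ + X]exchange_big /=.
have -> : \sum_(j in S) \sum_(i in S) (enum_rank i < enum_rank j)%N%:R * G i j =
          \sum_(i in S) \sum_(j in S) (enum_rank j < enum_rank i)%N%:R * G i j.
  by apply: eq_bigr => j _; apply: eq_bigr => i _; rewrite HG.
exact: addKK.
Qed.

Lemma swap_sum (X : finType) (S : {set X}) (G : X -> X -> K) :
  \sum_(a in S) \sum_(b in S | b != a) G a b = \sum_(a in S) \sum_(b in S | b != a) G b a.
Proof.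
under eq_bigr do rewrite big_mkcondr.
rewrite exchange_big; apply: eq_bigr => a _; rewrite [RHS]big_mkcondr.
by apply: eq_bigr => b _; rewrite eq_sym.
Qed.

Lemma phiN a : phi (- a) = phi a.
Proof. by rewrite /phi rmorphN oppK2. Qed.
Lemma phiB a b : phi (a - b) = phi a + phi b.
Proof. by rewrite phiD phiN. Qed.

Lemma twoset (T : finType) (e : {set T}) a b : #|e| = 2%N -> a \in e -> b \in e -> a != b ->
  e = [set a; b].
Proof.
move=> He Ha Hb Hab; apply/eqP; rewrite eq_sym eqEcard He cards2 Hab andbT.
by apply/subsetP => z; rewrite !inE => /orP [/eqP -> | /eqP ->].
Qed.

Lemma other_end (T : finType) (e : {set T}) c : #|e| = 2%N -> c \in e ->
  exists d, d != c /\ e = [set c; d].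
Proof.
move=> He Hc; have /cards2P [x0 [y0 [Hxy Hxy']]] : #|e| == 2%N by rewrite He.
move: Hc; rewrite Hxy' !inE => /orP [/eqP -> | /eqP ->].
  by exists y0; rewrite eq_sym.
by exists x0; rewrite setUC.
Qed.

Section Main.
Variables (T : finType) (D : dtree T) (gamma : T -> T -> seq T).
Hypothesis hgamma : forall x y : T, is_path_from (dE D) x y (gamma x y).
Local Notation E := (dE D).
Let Htree := d_is_tree D.

Lemma gxx x : gamma x x = [:: x].
Proof. apply: (path_unique Htree (hgamma x x)); by rewrite /= eqxx. Qed.

Lemma gamma_cons x y : gamma x y = x :: behead (gamma x y).
Proof. exact: path_head (hgamma x y). Qed.

Lemma mem_gamma x y : x \in gamma x y.
Proof. by rewrite gamma_cons mem_head. Qed.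

Lemma gtail x y : x != y -> gamma x y = x :: gamma (nth x (gamma x y) 1) y.
Proof.
move=> Hxy; have := hgamma x y.
case E1: (gamma x y) => [|z0 [|z s]] //.
  move=> /and4P [/eqP Hz /eqP Hl _ _]; by rewrite -Hz -Hl /= eqxx in Hxy.
move=> H; have H' := path_behead H.
move: H => /and4P [/eqP -> _ _ _].
by rewrite /= (path_unique Htree (hgamma z y) H').
Qed.

Section Alpha.
Variable al : T.
Hypothesis Hal : al \in dA D.
Local Notation g c := (gamma c al).
Definition par c := nth c (gamma c al) 1.
Definition Cs c := [set eps in E | (c \in eps) && (eps \notin pedges (g c))].

Lemma inc_head (c : T) (eps : {set T}) : c \in eps ->
  incident D eps (g c) = (eps \in E) && (eps \notin pedges (g c)).
Proof.
move=> Hc; rewrite /incident.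
have -> : has (fun u => u \in eps) (g c) by apply/hasP; exists c => //; exact: mem_gamma.
by rewrite andbT.
Qed.

Lemma qp_child (c : T) (eps : {set T}) : eps \in E -> c \in eps -> eps \notin pedges (g c) ->
  qpath D eps (g c) = dq D eps c.
Proof.
move=> HE Hc Hn; rewrite /qpath; case: pickP => [u /andP [Hu Hup] | H].
  case: (eqVneq u c) => [-> // | Hne]; exfalso.
  have Heps := twoset (dE_two HE) Hu Hc Hne.
  have := chord Htree (hgamma c al) Hup (mem_gamma c al) Hne.
  by rewrite -Heps HE (negPf Hn) => /(_ isT).
by have := H c; rewrite Hc mem_gamma.
Qed.

Lemma x_split (c : T) : xva D gamma c al = xhat D gamma c al * \prod_(eps in Cs c) dq D eps c.
Proof.
rewrite /xva /xhat (bigID (fun eps : {set T} => c \in eps)) /= mulrCA mulrC; congr (_ * _).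
  by congr (_ * _); apply: eq_bigl => i; rewrite andbA.
apply: eq_big => eps.
  rewrite /Cs inE; case Hc: (c \in eps); rewrite ?andbF ?andbT //.
  by rewrite inc_head //; case: (eps \in E).
move=> /andP [/andP [HE Hi] Hc].
by rewrite inc_head // HE /= in Hi; rewrite qp_child.
Qed.

Lemma delta_split (c : T) : valency E c = (#|Cs c| + (c != al))%N.
Proof.
rewrite /valency -(cardsID [set e | e \in pedges (g c)]) addnC; congr (_ + _)%N.
  apply: eq_card => e; rewrite /Cs !inE.
  by case: (e \in E); case: (c \in e); case: (e \in pedges _).
case: (eqVneq c al) => [-> | Hne].
  rewrite gxx /=; apply/eqP; rewrite cards_eq0; apply/eqP/setP => e.
  by rewrite !inE andbF.
have Hg := gtail Hne; set z := nth c (g c) 1 in Hg.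
have Hu := path_uniq Htree (hgamma c al).
have Hz := gamma_cons z al.
rewrite Hg Hz /= in Hu.
have -> : [set e in E | c \in e] :&: [set e | e \in pedges (g c)] = [set [set c; z]].
  apply/setP => e; rewrite !inE Hg Hz pedges_cons2 inE.
  case: (eqVneq e [set c; z]) => [-> | Hne'] /=.
    rewrite /= andbT !inE eqxx andbT; apply: (path_all (hgamma c al)).
    by rewrite Hg Hz pedges_cons2 mem_head.
  apply/negbTE/negP => /andP [/andP [_ Hce] He].
  have [a [b [Ha Hb Heq]]] := @pedges_mem _ (z :: behead (g z)) e He.
  move: Hce; rewrite Heq !inE => /orP [/eqP Hca | /eqP Hcb].
    by move: Hu; rewrite Hca Ha.
  by move: Hu; rewrite Hcb Hb.
by rewrite cards1.
Qed.

Lemma child c d : d != al -> par d = c -> g d = d :: g c.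
Proof. by move=> Hd Hp; rewrite {1}(gtail Hd) -/(par d) Hp. Qed.

Lemma ped_child c d : g d = d :: g c -> pedges (g d) = [set d; c] :: pedges (g c).
Proof. by move=> H; rewrite H (gamma_cons c al) pedges_cons2 -gamma_cons. Qed.

Lemma child_facts c d : g d = d :: g c ->
  [/\ [set d; c] \in Cs c, d != c & d \notin g c].
Proof.
move=> H; have Hp := ped_child H.
have Hu := path_uniq Htree (hgamma d al); rewrite H /= in Hu.
move/andP: Hu => [Hdn _].
have Hdc : d != c by apply/eqP => Hdc; rewrite Hdc mem_gamma in Hdn.
split => //.
have Hue := path_uniqe (hgamma d al); rewrite Hp /= in Hue.
move/andP: Hue => [Hn _].
rewrite /Cs !inE eqxx orbT Hn andbT /=.
rewrite andbT; by apply: (path_all (hgamma d al)); rewrite Hp mem_head.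
Qed.

Lemma h_child c d : g d = d :: g c ->
  xhat D gamma d al = xhat D gamma c al * \prod_(eps in Cs c | eps != [set d; c]) dq D eps c.
Proof.
move=> Hgd; have [HC Hdc Hdn] := child_facts Hgd.
have Hped := ped_child Hgd.
have Hped' : pedges (d :: g c) = [set d; c] :: pedges (g c) by rewrite -Hgd.
have key : forall eps, eps \in E -> (incident D eps (d :: g c) && (d \notin eps)) =
    (incident D eps (g c) && (eps != [set d; c])).
  move=> eps HE; rewrite /incident Hped' inE /= HE /=.
  case Hd: (d \in eps) => /=.
    rewrite andbF; apply/esym/negbTE/negP => /andP [/andP [Hn /hasP [u Hu Hue]] Hne].
    have Hud : d != u by apply/eqP => Hud; rewrite Hud Hu in Hdn.
    have Heps := twoset (dE_two HE) Hd Hue Hud.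
    have Hug : u \in g d by rewrite Hgd in_cons Hu orbT.
    have := chord Htree (hgamma d al) (mem_gamma d al) Hug Hud.
    rewrite -Heps HE Hped inE => /(_ isT) /orP [He | He].
      by rewrite He in Hne.
    by rewrite He in Hn.
  rewrite andbT.
  by case: (eps == _); case: (eps \in pedges (g c)); case: has.
rewrite /xhat Hgd -mulrA; congr (_ * _).
transitivity (\prod_(eps in E | incident D eps (g c) && (eps != [set d; c])) qpath D eps (g c)).
  apply: eq_big => eps.
    by case HE: (eps \in E) => //=; rewrite key.
  move=> /and3P [HE _ Hde].
  rewrite /qpath (@eq_pick _ _ (fun u => (u \in eps) && (u \in g c))) //.
  move=> u /=; rewrite in_cons; case: (eqVneq u d) => [-> | _] //=.
  by rewrite (negPf Hde).
rewrite (bigID (fun eps : {set T} => c \in eps)) /= mulrC; congr (_ * _).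
  apply: eq_bigl => eps.
  case Hc: (c \in eps); rewrite ?andbF ?andbT //=.
  have -> : eps != [set d; c] by apply/eqP => Heq; rewrite Heq !inE eqxx orbT in Hc.
  by rewrite andbT.
apply: eq_big => eps.
  rewrite /Cs inE; case Hc: (c \in eps); rewrite ?andbF ?andbT //=.
  by rewrite inc_head //; case: (eps \in E).
move=> /andP [/andP [HE /andP [Hi _]] Hc].
by rewrite inc_head // HE /= in Hi; rewrite qp_child.
Qed.

Lemma children_image c :
  [set [set d; c] | d in [set d | (d != al) && (par d == c)]] = Cs c.
Proof.
apply/setP => eps; apply/imsetP/idP.
  move=> [d]; rewrite inE => /andP [Hd /eqP Hp] ->.
  by have [] := child_facts (child Hd Hp).
rewrite inE => /andP [HE /andP [Hc Hn]].
have [d [Hdc Heps]] := other_end (dE_two HE) Hc.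
have Heps' : eps = [set d; c] by rewrite Heps setUC.
have Pd : is_path_from E d al (d :: g c).
  by apply: (path_cons (hgamma c al)); rewrite -Heps'.
have Hgd := path_unique Htree (hgamma d al) Pd.
exists d => //; rewrite inE; apply/andP; split.
  apply/eqP => Hda; move: Hgd; rewrite Hda gxx (gamma_cons c al).
  by case.
by rewrite /par Hgd /= (gamma_cons c al).
Qed.

Lemma local c : phi (delta D c) * phi (xva D gamma c al) +
  \sum_(d | (d != al) && (par d == c)) phi (xhat D gamma d al) =
  (c != al)%:R * phi (xhat D gamma c al).
Proof.
have Hsum : \sum_(d | (d != al) && (par d == c)) phi (xhat D gamma d al) =
    \sum_(eps in Cs c) phi (xhat D gamma c al) *
       \prod_(eps' in Cs c | eps' != eps) phi (dq D eps' c).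
  transitivity (\sum_(eps in [set [set d; c] | d in [set d | (d != al) && (par d == c)]])
    phi (xhat D gamma c al) * \prod_(eps' in Cs c | eps' != eps) phi (dq D eps' c));
    last by rewrite children_image.
  rewrite big_imset /=.
    apply: eq_big => d; first by rewrite inE.
    move=> /andP [Hd /eqP Hp].
    by rewrite (h_child (child Hd Hp)) phiM phi_prod.
  move=> d1 d2; rewrite !inE => /andP [H1 /eqP P1] /andP [H2 /eqP P2] Heq.
  have [_ N1 _] := child_facts (child H1 P1).
  have : d1 \in [set d2; c] by rewrite -Heq !inE eqxx.
  by rewrite !inE (negPf N1) orbF => /eqP.
rewrite Hsum /delta phi_nat delta_split x_split phiM phi_prod.
rewrite -big_distrr /= mulrCA -mulrDr parity 1?mulrC //.
  move=> i j Hi Hj Hqi Hqj; apply/eqP; apply: contraT => Hij.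
  move: Hi Hj; rewrite /Cs !inE => /andP [HEi /andP [Hci _]] /andP [HEj /andP [Hcj _]].
  case: (boolP (c \in dA D)) => HcA.
    by move: Hqi; rewrite (d_q_arrow HEi Hci HcA) /phi rmorph1 => /eqP; rewrite oner_eq0.
  have Hg := d_q_coprime HcA HEi HEj Hij Hci Hcj.
  have := dvdz_gcd 2 (dq D i c) (dq D j c).
  by rewrite -!phi0_dvd Hqi Hqj eqxx Hg.
move=> /negPn /eqP Hca i; rewrite /Cs !inE => /andP [HEi /andP [Hci _]].
by rewrite (d_q_arrow HEi Hci) ?Hca // /phi rmorph1.
Qed.

Lemma sum_S : \sum_c phi (delta D c) * phi (xva D gamma c al) = 0.
Proof.
have H : \sum_c (phi (delta D c) * phi (xva D gamma c al) +
  \sum_(d | (d != al) && (par d == c)) phi (xhat D gamma d al)) =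
  \sum_c (c != al)%:R * phi (xhat D gamma c al) by apply: eq_bigr => c _; exact: local.
rewrite big_split /= in H.
have E1 : \sum_c \sum_(d | (d != al) && (par d == c)) phi (xhat D gamma d al) =
  \sum_(d | d != al) phi (xhat D gamma d al).
  by rewrite [RHS](partition_big par xpredT).
have E2 : \sum_c (c != al)%:R * phi (xhat D gamma c al) =
  \sum_(d | d != al) phi (xhat D gamma d al).
  by rewrite [RHS]big_mkcond; apply: eq_bigr => c _; case: (c != al); rewrite ?mul1r ?mul0r.
rewrite E1 E2 -{2}[\sum_(d | d != al) _]add0r in H.
exact: addIr H.
Qed.

End Alpha.

Lemma arrow_unique a e e' : a \in dA D -> e \in E -> a \in e -> e' \in E -> a \in e' -> e = e'.
Proof.
move=> Ha He Hae He' Hae'.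
have := d_arrow_leaf Ha; rewrite /valency => /eqP /cards1P [x Hx].
have : e \in [set e in E | a \in e] by rewrite inE He Hae.
have : e' \in [set e in E | a \in e] by rewrite inE He' Hae'.
by rewrite Hx !inE => /eqP -> /eqP ->.
Qed.

Lemma arrow_gamma a b : a \in dA D -> b != a ->
  exists z s, gamma a b = [:: a, z & s] /\ arrow_edge D a = [set a; z].
Proof.
move=> Ha Hb; rewrite eq_sym in Hb.
have Hg := gtail Hb; set z := nth a (gamma a b) 1 in Hg.
rewrite (gamma_cons z b) in Hg.
exists z, (behead (gamma z b)); split => //.
have HE : [set a; z] \in E.
  by apply: (path_all (hgamma a b)); rewrite Hg pedges_cons2 mem_head.
rewrite /arrow_edge; case: pickP => [e /andP [He Hae] | H].
  by apply: arrow_unique Ha He Hae HE _; rewrite !inE eqxx.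
by have := H [set a; z]; rewrite HE !inE eqxx.
Qed.

Lemma pue_eq a : a \in dA D ->
  pue D gamma a (arrow_edge D a) = \sum_(b in dA1 D | b != a) xva D gamma a b.
Proof.
move=> Ha; rewrite /pue; apply: eq_big => b.
  case: (eqVneq b a) => [-> | Hb]; first by rewrite gxx /= andbF.
  have [z [s [Hg Hae]]] := arrow_gamma Ha Hb.
  by rewrite Hg Hae pedges_cons2 mem_head andbT.
move=> /andP [_ He]; have Hb : b != a by apply/eqP => Hba; rewrite Hba gxx in He.
have [z [s [Hg Hae]]] := arrow_gamma Ha Hb.
rewrite /xhat /xva; congr (_ * _); apply: eq_bigl => eps.
case HE: (eps \in E) => //=.
case Hi: (incident D eps (gamma a b)) => //=.
apply/negP => Haeps.
have HE' : [set a; z] \in E by apply: (path_all (hgamma a b)); rewrite Hg pedges_cons2 mem_head.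
have Haz : a \in [set a; z] by rewrite !inE eqxx.
have Heq := arrow_unique Ha HE Haeps HE' Haz.
by move: Hi; rewrite /incident Heq Hg pedges_cons2 mem_head /= andbF.
Qed.

Lemma xaa a : a \in dA D -> xva D gamma a a = df D a.
Proof.
move=> Ha; rewrite /xva gxx big1 ?mulr1 // => eps /andP [HE Hi].
have Hae : a \in eps by move: Hi => /andP [_ /hasP [u]]; rewrite inE => /eqP ->.
rewrite /qpath; case: pickP => [u /andP [_] | H].
  by rewrite inE => /eqP ->; exact: d_q_arrow.
by have := H a; rewrite Hae mem_head.
Qed.

Lemma delta_arrow a : a \in dA D -> delta D a = 1.
Proof. by move=> Ha; rewrite /delta d_arrow_leaf. Qed.

Lemma sym_x a b : df D a * xva D gamma a b = df D b * xva D gamma b a.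
Proof.
have Hr : gamma b a = rev (gamma a b).
  apply: (path_unique Htree (hgamma b a)); apply: path_rev; exact: hgamma.
rewrite /xva Hr mulrCA; congr (_ * (_ * _)).
apply: eq_big => eps.
  by rewrite /incident pedges_rev mem_rev has_rev.
move=> _; rewrite /qpath; congr (match _ with Some u => _ | None => _ end).
by apply: eq_pick => u; rewrite mem_rev.
Qed.

End Main.

Theorem theorem3p1 (T : finType) (D : dtree T) (gamma : T -> T -> seq T)
  (hgamma : forall x y : T, is_path_from (dE D) x y (gamma x y)) :
  (2 %| Minv D gamma + Finv D gamma)%Z.
Proof.
rewrite -phi0_dvd phiD; apply/eqP.
set A1 := dA1 D.
set X := fun v a => phi (xva D gamma v a).
set Dl := fun v => phi (delta D v).
set Fa := fun a => phi (df D a).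
have HA : forall a, a \in A1 -> a \in dA D.
  by move=> a; rewrite /A1 /dA1 inE => /andP [].
have HV : dV D :|: dA0 D = ~: A1.
  apply/setP => v; rewrite /dV /A1 /dA1 /dA0 !inE.
  by case: (v \in dA D); case: (df D v == 0).
have p2 : phi 2 = 0 := two0.
have HM : phi (Minv D gamma) = \sum_(a in A1) \sum_(v in ~: A1) Dl v * X v a.
  rewrite /Minv HV phiN phi_sum.
  under eq_bigr do rewrite phiM phiB p2 addr0 phi_sum big_distrl /=.
  rewrite exchange_big; apply: eq_bigr => a _; apply: eq_bigr => v _; by rewrite mulrC.
have HF : phi (Finv D gamma) = \sum_(a in A1)
    (Fa a + \sum_(b in A1 | b != a) X a b + Fa a * \sum_(b in A1 | b != a) X a b).
  rewrite /Finv phi_sum; apply: eq_bigr => a Ha.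
  by rewrite /Falpha phi_gcd pue_eq ?phi_sum // HA.
have Hloc : forall a, a \in A1 ->
    \sum_(v in ~: A1) Dl v * X v a + \sum_(b in A1 | b != a) X b a = Fa a.
  move=> a Ha; have HaA := HA a Ha.
  have H0 := sum_S hgamma HaA.
  rewrite (bigID (fun v => v \in A1)) /= (bigD1 a) //= in H0.
  rewrite delta_arrow // xaa // (_ : phi 1 = 1) ?mul1r in H0; last exact: rmorph1.
  have E1 : \sum_(i in A1 | i != a) phi (delta D i) * phi (xva D gamma i a) =
            \sum_(b in A1 | b != a) X b a.
    apply: eq_bigr => i /andP [Hi _]; rewrite delta_arrow ?HA //.
    by rewrite (_ : phi 1 = 1) ?mul1r //; exact: rmorph1.
  have E2 : \sum_(i | i \notin A1) phi (delta D i) * phi (xva D gamma i a) =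
            \sum_(v in ~: A1) Dl v * X v a.
    by apply: eq_bigl => v; rewrite in_setC.
  rewrite E1 E2 in H0.
  set S1 := \sum_(b in A1 | b != a) X b a in H0 *.
  set S2 := \sum_(v in ~: A1) Dl v * X v a in H0 *.
  have -> : Fa a = Fa a + (Fa a + S1 + S2) by rewrite H0 addr0.
  by rewrite !addrA addKK add0r addrC.
have HS : \sum_(a in A1) Fa a * \sum_(b in A1 | b != a) X a b = 0.
  under eq_bigr do rewrite big_distrr.
  by apply: sym_sum => a b; rewrite /Fa /X /= -!phiM sym_x.
have HP := @swap_sum T A1 X.
rewrite HM HF !big_split /= HS addr0 HP.
rewrite [X in _ + X]addrC addrA -big_split /= (eq_bigr _ Hloc).
exact: addKK.
Qed.
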